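(* For every graph $G$, $\widehat{\Theta}(G)=\rho_T(G)=\rho_{\widehat{T}}(\overline{G})=\Theta(\overline{G})$, where $\overline{G}$ is the complement of $G$.
   Context: Graphs are finite and simple. A graph $G=(V,E)$ is a threshold graph if there exist weights $w:V\to\mathbb{R}$ and a real number $s$ such that for all distinct $i,j\in V$: $w(i)+w(j)\ge s$ iff $ij\in E$. $\Theta(G)$ is the least $k\ge 1$ such that there exist threshold graphs $(V,E_1),\dots,(V,E_k)$ with each $E_i\subseteq E$ and $\bigcup_i E_i=E$. $\widehat{\Theta}(G)$ is the least $k\ge1$ such that there exist threshold graphs $(V,E_1),\dots,(V,E_k)$ with $\bigcap_i E_i=E$. Min-plus dot product: $u\odot v=\min_i(u_i+v_i)$ on $(\mathbb{R}\cup\{\infty\})^k$; max-plus dot product: $u\,\widehat{\odot}\,v=\max_i(u_i+v_i)$ on $(\mathbb{R}\cup\{-\infty\})^k$. A min-plus (resp. max-plus) $k$-tropical dot product representation of $G$ is a map $f$ from $V$ to $(\mathbb{R}\cup\{\infty\})^k$ (resp. $(\mathbb{R}\cup\{-\infty\})^k$) with threshold $t>0$ such that for distinct $x,y$: $xy\in E$ iff $f(x)\odot f(y)\ge t$ (resp. $f(x)\,\widehat{\odot}\,f(y)\ge t$). $\rho_T(G)$ (resp. $\rho_{\widehat T}(G)$) is the least $k\ge 1$ for which such a min-plus (resp. max-plus) representation exists. *)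

(* Defs.v *)
From HB Require Import structures.
From mathcomp Require Import all_boot all_order all_algebra.
From mathcomp Require Import constructive_ereal Rstruct.
From Stdlib Require Rdefinitions.
Notation R := Rdefinitions.R.

Set Implicit Arguments.
Unset Strict Implicit.
Unset Printing Implicit Defensive.
Import Order.TTheory GRing.Theory Num.Theory.
Local Open Scope ring_scope.

Definition simple_graph (T : finType) (e : rel T) : Prop :=
  symmetric e /\ irreflexive e.

Definition compl_graph (T : finType) (e : rel T) : rel T :=
  fun x y => (x != y) && ~~ e x y.

Definition is_threshold (T : finType) (E' : rel T) : Prop :=
  exists (w : T -> R) (s : R),
    forall x y : T, x != y -> (s <= w x + w y) = E' x y.

Definition theta_cover (T : finType) (e : rel T) (k : nat) : Prop :=
  exists Es : 'I_k -> rel T,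
    (forall i, is_threshold (Es i)) /\
    (forall i x y, x != y -> Es i x y -> e x y) /\
    (forall x y, x != y -> e x y -> exists i, Es i x y).

Definition theta_hat_cover (T : finType) (e : rel T) (k : nat) : Prop :=
  exists Es : 'I_k -> rel T,
    (forall i, is_threshold (Es i)) /\
    (forall x y, x != y -> (e x y <-> forall i, Es i x y)).

Definition to_pinf (a : option R) : \bar R :=
  if a is Some r then r%:E else +oo%E.
Definition to_ninf (a : option R) : \bar R :=
  if a is Some r then r%:E else -oo%E.

Definition minplus_dot (k : nat) (u v : 'I_k -> option R) : \bar R :=
  \big[Order.min/+oo%E]_(i < k) (to_pinf (u i) + to_pinf (v i))%E.

Definition maxplus_dot (k : nat) (u v : 'I_k -> option R) : \bar R :=
  \big[Order.max/-oo%E]_(i < k) (to_ninf (u i) + to_ninf (v i))%E.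

Definition minplus_rep (T : finType) (e : rel T) (k : nat) : Prop :=
  exists (f : T -> 'I_k -> option R) (t : R), 0 < t /\
    forall x y : T, x != y -> (e x y <-> (t%:E <= minplus_dot (f x) (f y))%E).

Definition maxplus_rep (T : finType) (e : rel T) (k : nat) : Prop :=
  exists (f : T -> 'I_k -> option R) (t : R), 0 < t /\
    forall x y : T, x != y -> (e x y <-> (t%:E <= maxplus_dot (f x) (f y))%E).

Definition least_pos (P : nat -> Prop) (k : nat) : Prop :=
  ((1 <= k)%N /\ P k /\ forall j : nat, (1 <= j)%N -> P j -> (k <= j)%N)%type.

(* Main.v *)
Require Import Defs.
From HB Require Import structures.
From mathcomp Require Import all_boot all_order all_algebra.
From mathcomp Require Import constructive_ereal Rstruct.
From mathcomp Require Import lra.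
From Stdlib Require Rdefinitions Classical.
Set Implicit Arguments.
Unset Strict Implicit.
Unset Printing Implicit Defensive.
Import Order.TTheory GRing.Theory Num.Theory.
Local Open Scope ring_scope.


Lemma le_bigmin_all (k : nat) (F : 'I_k -> \bar R) (t : \bar R) :
  (t <= \big[Order.min/+oo%E]_(i < k) F i)%E = [forall i, (t <= F i)%E].
Proof.
elim: k F => [|k IH] F; first by rewrite big_ord0 leey; apply/esym/forallP => -[].
rewrite big_ord_recl le_min IH; apply/andP/forallP => [[h1 /forallP h2] i|h].
  by case: (unliftP ord0 i) => [j ->|->].
by split; [exact: h | apply/forallP => j; exact: h].
Qed.

Lemma le_bigmax_ex (k : nat) (F : 'I_k -> \bar R) (t : R) :
  (t%:E <= \big[Order.max/-oo%E]_(i < k) F i)%E = [exists i, (t%:E <= F i)%E].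
Proof.
elim: k F => [|k IH] F; first by rewrite big_ord0 leeNy_eq; apply/esym/existsP => -[[]].
rewrite big_ord_recl le_max IH; apply/orP/existsP => [[h|/existsP [j h]]|[i h]].
- by exists ord0.
- by exists (lift ord0 j).
by case: (unliftP ord0 i) h => [j ->|->] h; [right; apply/existsP; exists j|left].
Qed.

Lemma norm_le_sum (T : finType) (g : T -> R) (x : T) :
  `|g x| <= \sum_y `|g y|.
Proof.
rewrite (bigD1 x) //= lerDl; apply: sumr_ge0 => y _; exact: normr_ge0.
Qed.

Lemma thr_pinf (T : finType) (a : T -> option R) (t : R) :
  is_threshold (fun x y => (t%:E <= to_pinf (a x) + to_pinf (a y))%E).
Proof.
pose S := \sum_y `|odflt 0 (a y)|.
have S0 : 0 <= S by apply: sumr_ge0 => y _; exact: normr_ge0.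
have Hx := norm_le_sum (fun y => odflt 0 (a y)).
rewrite -/S /= in Hx. clearbody S.
exists (fun x => if a x is Some r then r else `|t| + S), t => x y _.
have Ht : - `|t| <= t <= `|t| by rewrite -ler_norml.
case/andP: Ht => Ht1 Ht2.
have := Hx x; have := Hx y; rewrite !ler_norml.
case: (a x) => [r|]; case: (a y) => [q|] /= /andP[? ?] /andP[? ?]; rewrite ?leey ?lee_fin //;
  apply/esym; lra.
Qed.

Lemma thr_ninf (T : finType) (a : T -> option R) (t : R) :
  is_threshold (fun x y => (t%:E <= to_ninf (a x) + to_ninf (a y))%E).
Proof.
pose S := \sum_y `|odflt 0 (a y)|.
have S0 : 0 <= S by apply: sumr_ge0 => y _; exact: normr_ge0.
have Hx := norm_le_sum (fun y => odflt 0 (a y)).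
rewrite -/S /= in Hx. clearbody S.
exists (fun x => if a x is Some r then r else - (`|t| + S + 1)), t => x y _.
have Ht : - `|t| <= t <= `|t| by rewrite -ler_norml.
case/andP: Ht => Ht1 Ht2.
have := Hx x; have := Hx y; rewrite !ler_norml.
case: (a x) => [r|]; case: (a y) => [q|] /= /andP[? ?] /andP[? ?]; rewrite ?leeNy_eq ?lee_fin //;
  apply/negbTE; rewrite -ltNge; lra.
Qed.

Lemma gap_seq (l : seq R) (s : R) :
  exists m, m < s /\ (forall v, v \in l -> v < s -> v <= m).
Proof.
elim: l => [|v l [m [ms Hm]]]; first by exists (s - 1); split => //; lra.
case: (ltP v s) => vs.
- exists (Num.max m v); split; first by rewrite gt_max ms vs.
  move=> u; rewrite in_cons => /orP[/eqP->|ul] us; rewrite le_max ?lexx ?orbT //.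
  by rewrite Hm.
- exists m; split => // u; rewrite in_cons => /orP[/eqP->|ul] us; last exact: Hm.
  by move: (lt_le_trans us vs); rewrite ltxx.
Qed.

Lemma thr_compl (T : finType) (E : rel T) :
  is_threshold E -> is_threshold (fun x y => ~~ E x y).
Proof.
case=> w [s Hw].
have [m [ms Hm]] := gap_seq [seq w p.1 + w p.2 | p <- enum [set: T * T]] s.
exists (fun x => - w x), (- m) => x y xy.
rewrite -(Hw _ _ xy) -ltNge.
apply/idP/idP => h.
- have : w x + w y <= m by lra.
  by move=> h'; apply: (le_lt_trans h' ms).
- have : w x + w y <= m.
    apply: Hm h; apply/mapP; exists (x, y) => //; by rewrite mem_enum inE.
  move=> h'; lra.
Qed.

Lemma hat_cover (T : finType) (e : rel T) (k : nat) :
  theta_hat_cover e k <-> theta_cover (compl_graph e) k.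
Proof.
split.
- case=> Es [Ht He]; exists (fun i x y => ~~ Es i x y); split.
    by move=> i; apply: thr_compl.
  split.
  + move=> i x y xy nE; rewrite /compl_graph xy /=; apply/negP => exy.
    by move: nE; rewrite ((He x y xy).1 exy i).
  + move=> x y xy; rewrite /compl_graph xy /= => /negP nexy.
    case: (boolP [exists i, ~~ Es i x y]) => [/existsP [i hi]|]; first by exists i.
    rewrite negb_exists => /forallP hall; exfalso; apply: nexy.
    by apply/(He x y xy) => i; have := hall i; rewrite negbK.
- case=> Es [Ht [Hs Hc]]; exists (fun i x y => ~~ Es i x y); split.
    by move=> i; apply: thr_compl.
  move=> x y xy; split.
  + move=> exy i; apply/negP => hi; have := Hs i x y xy hi.
    by rewrite /compl_graph xy exy.
  + move=> hall; apply/negPn/negP => nexy.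
    have [i hi] : exists i, Es i x y by apply: Hc => //; rewrite /compl_graph xy nexy.
    by have := hall i; rewrite hi.
Qed.

Lemma thr_choice (k : nat) (T : finType) (Es : 'I_k -> rel T) :
  (forall i, is_threshold (Es i)) ->
  exists (w : 'I_k -> T -> R) (s : 'I_k -> R),
    forall i x y, x != y -> (s i <= w i x + w i y) = Es i x y.
Proof.
move=> H.
have H' : forall i, exists p : (T -> R) * R,
    forall x y, x != y -> (p.2 <= p.1 x + p.1 y) = Es i x y.
  by move=> i; case: (H i) => w [s h]; exists (w, s).
have [p Hp] := fin_all_exists H'.
by exists (fun i => (p i).1), (fun i => (p i).2).
Qed.

Lemma hat_minplus (T : finType) (e : rel T) (k : nat) :
  theta_hat_cover e k <-> minplus_rep e k.
Proof.
split.
- case=> Es [Ht He]; have [w [s Hw]] := thr_choice Ht.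
  exists (fun x i => Some (w i x + (1 - s i) / 2)), 1; split; first by lra.
  move=> x y xy; rewrite /minplus_dot le_bigmin_all (He x y xy).
  split => [h|/forallP h i].
  + apply/forallP => i /=; have := h i; rewrite -EFinD lee_fin -(Hw i x y xy) => ?.
    lra.
  + have := h i; rewrite /= -EFinD lee_fin -(Hw i x y xy) => ?; lra.
- case=> f [t [t0 Hf]].
  exists (fun i x y => (t%:E <= to_pinf (f x i) + to_pinf (f y i))%E); split.
    by move=> i; apply: (thr_pinf (fun x => f x i)).
  move=> x y xy; rewrite (Hf x y xy) /minplus_dot le_bigmin_all.
  by split => [/forallP|?]; last apply/forallP.
Qed.

Lemma cover_maxplus (T : finType) (e : rel T) (k : nat) :
  theta_cover e k <-> maxplus_rep e k.
Proof.
split.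
- case=> Es [Ht [Hs Hc]]; have [w [s Hw]] := thr_choice Ht.
  exists (fun x i => Some (w i x + (1 - s i) / 2)), 1; split; first by lra.
  move=> x y xy; rewrite /maxplus_dot le_bigmax_ex.
  split => [/(Hc x y xy) [i hi]|/existsP [i]].
  + apply/existsP; exists i => /=; rewrite -EFinD lee_fin.
    move: hi; rewrite -(Hw i x y xy); lra.
  + rewrite /= -EFinD lee_fin => h; apply: (Hs i x y xy).
    rewrite -(Hw i x y xy); lra.
- case=> f [t [t0 Hf]].
  exists (fun i x y => (t%:E <= to_ninf (f x i) + to_ninf (f y i))%E); split.
    by move=> i; apply: (thr_ninf (fun x => f x i)).
  split.
  + move=> i x y xy h; apply/(Hf x y xy); rewrite /maxplus_dot le_bigmax_ex.
    by apply/existsP; exists i.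
  + move=> x y xy /(Hf x y xy); rewrite /maxplus_dot le_bigmax_ex => /existsP [i h].
    by exists i.
Qed.

Definition star (T : finType) (e : rel T) (v : T) : rel T :=
  fun x y => ((x == v) && e v y) || ((y == v) && e v x).

Lemma thr_star (T : finType) (e : rel T) (v : T) :
  irreflexive e -> is_threshold (star e v).
Proof.
move=> irr.
exists (fun u => if u == v then 2 else if e v u then 0 else -10), 2 => x y xy.
rewrite /star.
case: (eqVneq x v) => [xv|xv]; case: (eqVneq y v) => [yv|yv] /=.
- by move: xy; rewrite xv yv eqxx.
- subst x; rewrite orbF; case: (e v y) => /=;
    [apply/idP; lra | apply/negbTE; rewrite -ltNge; lra].
- case: (e v x) => /=;
    [apply/idP; lra | apply/negbTE; rewrite -ltNge; lra].
- apply/negbTE; rewrite -ltNge; case: (e v x); case: (e v y) => /=; lra.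
Qed.

Lemma cover_exists (T : finType) (e : rel T) :
  symmetric e -> irreflexive e -> theta_cover e #|T|.+1.
Proof.
move=> sym irr.
exists (fun i : 'I_#|T|.+1 =>
  if [pick v | enum_rank v == i :> nat] is Some v then star e v else (fun _ _ => false)).
split.
  move=> i; case: pickP => [v _|_]; first exact: thr_star.
  by exists (fun _ => 0), 1 => x y _; apply/idP/idP => //=; lra.
split.
  move=> i x y xy; case: pickP => [v _|_] //.
  by rewrite /star => /orP[/andP[/eqP-> //]|/andP[/eqP-> h]]; rewrite sym.
move=> x y xy exy; exists (inord (enum_rank x)).
have hr : (enum_rank x < #|T|.+1)%N by apply: ltnW; rewrite ltnS.
case: pickP => [v|/(_ x)]; last by rewrite inordK ?eqxx.
rewrite inordK // => /eqP/val_inj/enum_rank_inj ->.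
by rewrite /star eqxx exy.
Qed.

Lemma least_exists (P : nat -> Prop) (n : nat) :
  (1 <= n)%N -> P n -> exists k, least_pos P k.
Proof.
elim/ltn_ind: n => n IH n1 Pn.
case: (Classical_Prop.classic (exists j, [/\ (1 <= j)%N, (j < n)%N & P j])).
- by case=> j [j1 jn Pj]; exact: (IH j jn j1 Pj).
- move=> H; exists n; split => //; split => // j j1 Pj.
  rewrite leqNgt; apply/negP => jn; apply: H; by exists j.
Qed.

Lemma least_iff (P Q : nat -> Prop) (k : nat) :
  (forall j, P j <-> Q j) -> least_pos P k -> least_pos Q k.
Proof.
move=> H [k1 [Pk Hm]]; split => //; split; first exact/H.
by move=> j j1 /H; apply: Hm.
Qed.

Theorem mainTheorem9 (T : finType) (e : rel T) :
  simple_graph e ->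
  exists k : nat,
    least_pos (theta_hat_cover e) k /\
    least_pos (minplus_rep e) k /\
    least_pos (maxplus_rep (compl_graph e)) k /\
    least_pos (theta_cover (compl_graph e)) k.
Proof.
case=> sym irr.
have symc : symmetric (compl_graph e).
  by move=> x y; rewrite /compl_graph eq_sym sym.
have irrc : irreflexive (compl_graph e) by move=> x; rewrite /compl_graph eqxx.
have [k Hk] := least_exists (isT : (1 <= #|T|.+1)%N) (cover_exists symc irrc).
exists k; split; last split; last split => //.
- by apply: least_iff Hk => j; rewrite hat_cover.
- by apply: least_iff Hk => j; rewrite -hat_minplus hat_cover.
- by apply: least_iff Hk => j; rewrite cover_maxplus.
Qed.
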